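(* Let $P$ be a weighted combinatorial optimization problem and let $A$ be a deterministic algorithm for $P$ that uses symbolic perturbation. Let $\mathcal{C}$ be any null case of $P$. Then the following three statements hold. (a) If $A(S,w) \in L$ for every instance $(S,w) \notin \mathcal{C}$, then $A(S,w) \in L$ for every instance $(S,w)$ of $P$. (b) Suppose that for each structure $S$, a nonnegative integer $\rho_S(\pi)$ (e.g. running time or memory consumption) is assigned to every root-to-leaf path $\pi$ of $T_S$. Let $\pi(S,w)$ denote the path traversed by $A$ on input $(S,w)$. Let $t : P \to \mathbb{N}$, and suppose $\rho_S(\pi(S,w)) \le t(S)$ for every instance $(S,w) \notin \mathcal{C}$. Then $\rho_S(\pi(S,w)) \le t(S)$ for every instance $(S,w)$. (c) Suppose $A(S,w) \in L$ for every instance $(S,w)$. For each $S=(n,W,L,\mathrm{cost}) \in P$, let $b(S,\cdot) : W \to \mathbb{R}$ be continuous. If $\mathrm{cost}(w, A(S,w)) \le b(S,w)$ for every instance $(S,w) \notin \mathcal{C}$, then this inequality holds for every instance $(S,w)$.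
   Context: Let $Q$ be a subfield of $\mathbb{R}$ (e.g. $\mathbb{R}$, $\mathbb{Q}$, or the real algebraic numbers). Equip $Q^n$ with the Euclidean metric $d$. For $x \in Q^n$ and $\epsilon>0$, the $\epsilon$-neighborhood of $x$ is $\{y \in Q^n \mid d(x,y)<\epsilon\}$. A neighborhood of $x$ is an $\epsilon$-neighborhood of $x$ for some $\epsilon>0$. A set $U \subseteq Q^n$ is open if it contains a neighborhood of each of its points. A set $C \subseteq Q^n$ is nowhere open if it contains no non-empty open subset of $Q^n$. A set $X \subseteq Q^n$ is semi-open if for every $x \in X$ and every neighborhood $N$ of $x$ there is a non-empty open set $U \subseteq Q^n$ with $U \subseteq N \cap X$. For $x \in \mathbb{R}$, $\mathrm{sgn}(x) = x/|x|$ if $x \neq 0$ and $\mathrm{sgn}(0)=0$. Problems: A weighted combinatorial optimization (minimization) problem $P$ is a set of problem structures; each structure $S=(n,W,L,\mathrm{cost})$ consists of a positive integer $n$, a semi-open set $W \subseteq Q^n$ of admissible weight vectors, a finite non-empty set $L$ of feasible solutions, and a function $\mathrm{cost} : W \times L \to \mathbb{R}$ such that $\mathrm{cost}(\cdot,l)$ is continuous on $W$ for every $l \in L$. An instance is a pair $(S,w)$ with $S \in P$ and $w \in W$. A null case of $P$ is a set $\mathcal{C}$ of instances of $P$ such that for every structure $S=(n,W,L,\mathrm{cost}) \in P$ the set $\{w \in W \mid (S,w) \in \mathcal{C}\}$ is nowhere open. Algorithms: A deterministic algorithm $A$ for $P$ assigns to each structure $S=(n,W,L,\mathrm{cost}) \in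 P$ a finite rooted binary decision tree $T_S$. Each leaf is labelled with an element of $L \cup \{l_f\}$, where $l_f \notin L$ is a special symbol representing failure. Each internal node $u$ is labelled with a continuous branching function $v_u : W \to Q$. On input $(S,w)$, $A$ starts at the root of $T_S$. At an internal node $u$ it moves to the left child if $v_u(w)<0$ and to the right child if $v_u(w)>0$. If $v_u(w)=0$ (a tie), it moves to the left or right child according to a deterministic tie-breaking policy, i.e. a rule fixing, for every instance $(S,w)$ and every internal node $u$ with $v_u(w)=0$, which child is taken. $A$ returns the label $A(S,w)$ of the leaf reached. Directions: Let $W \subseteq Q^n$ be semi-open, $w \in W$, and $h : \mathbb{R} \to Q^n$ with $h(0)=0$ and $h$ continuous at $0$. $W$ continues into direction $h$ at $w$ if there is $\delta>0$ such that for every $0<a<\delta$ some neighborhood of $w+h(a)$ is contained in $W$. If $W$ continues into direction $h$ at $w$ and $f : W \to Q$ is continuous, then $f$ is increasing (resp. constant, decreasing) into direction $h$ at $w$ if the following holds: there is $\delta>0$ such that for every $0<a<\delta$ there is a neighborhood $N_a \subseteq W$ of $w+h(a)$ with $\mathrm{sgn}(f(y)-f(w)) = 1$ (resp. $0$, $-1$) for all $y \in N_a$. Symbolic perturbation: $A$ uses symbolic perturbation if, for every instance $(S,w)$ with $S=(n,W,L,\mathrm{cost})$, there exists a function $h_{S,w} : \mathbb{R} \to Q^n$ satisfying all of the following: - $h_{S,w}(0)=0$ and $h_{S,w}$ is continuous at $0$; - $W$ continues into direction $h_{S,w}$ at $w$; - every branching function of $T_S$ is decreasing, constant, or increasing into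 direction $h_{S,w}$ at $w$; - whenever a tie $v_u(w)=0$ occurs at an internal node $u$ on input $(S,w)$, $A$ takes the left child if $v_u$ is decreasing into direction $h_{S,w}$ at $w$, and the right child otherwise. *)

(* Defs.v *)
From Stdlib Require Import Reals List.
Import ListNotations.
Open Scope R_scope.

Definition subfield (Q : R -> Prop) : Prop :=
  Q 0 /\ Q 1 /\
  (forall x y, Q x -> Q y -> Q (x + y)) /\
  (forall x, Q x -> Q (- x)) /\
  (forall x y, Q x -> Q y -> Q (x * y)) /\
  (forall x, Q x -> x <> 0 -> Q (/ x)).

(* Vectors: functions nat -> R; a point of Q^n has coordinates 0..n-1 in Q
   and is padded with zeros beyond n (so representation is unique). *)
Definition vec := nat -> R.

Definition Qpt (Q : R -> Prop) (n : nat) (x : vec) : Prop :=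
  (forall i, (i < n)%nat -> Q (x i)) /\ (forall i, (n <= i)%nat -> x i = 0).

Definition vzero : vec := fun _ => 0.
Definition vadd (x y : vec) : vec := fun i => x i + y i.

Fixpoint sumsq (n : nat) (x y : vec) : R :=
  match n with
  | O => 0
  | S m => sumsq m x y + (x m - y m) ^ 2
  end.

Definition dist (n : nat) (x y : vec) : R := sqrt (sumsq n x y).

Definition nbhd (Q : R -> Prop) (n : nat) (x : vec) (eps : R) (y : vec) : Prop :=
  Qpt Q n y /\ dist n x y < eps.

Definition is_open (Q : R -> Prop) (n : nat) (U : vec -> Prop) : Prop :=
  (forall x, U x -> Qpt Q n x) /\
  (forall x, U x -> exists eps, eps > 0 /\ forall y, nbhd Q n x eps y -> U y).

Definition nowhere_open (Q : R -> Prop) (n : nat) (C : vec -> Prop) : Prop :=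
  forall U : vec -> Prop, is_open Q n U -> (forall x, U x -> C x) ->
    forall x, ~ U x.

Definition semi_open (Q : R -> Prop) (n : nat) (X : vec -> Prop) : Prop :=
  (forall x, X x -> Qpt Q n x) /\
  forall x eps, X x -> eps > 0 ->
    exists U : vec -> Prop, is_open Q n U /\ (exists u, U u) /\
      (forall y, U y -> nbhd Q n x eps y /\ X y).

Definition cont_on (n : nat) (W : vec -> Prop) (f : vec -> R) : Prop :=
  forall x eps, W x -> eps > 0 ->
    exists delta, delta > 0 /\
      forall y, W y -> dist n x y < delta -> Rabs (f y - f x) < eps.

Definition sgn (x : R) : R := if Req_EM_T x 0 then 0 else x / Rabs x.

Record structure := mkStructure {
  s_n : nat;
  s_W : vec -> Prop;
  s_L : Type;
  s_cost : vec -> s_L -> R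
}.

Definition valid_structure (Q : R -> Prop) (S : structure) : Prop :=
  semi_open Q (s_n S) (s_W S) /\
  (exists enum : list (s_L S), forall l, In l enum) /\
  inhabited (s_L S) /\
  (forall l, cont_on (s_n S) (s_W S) (fun w => s_cost S w l)).

(* Finite rooted binary decision trees; leaves labelled by L ∪ {l_f}
   where None represents the failure symbol l_f. *)
Inductive dtree (L : Type) : Type :=
| Leaf : option L -> dtree L
| Node : (vec -> R) -> dtree L -> dtree L -> dtree L.
Arguments Leaf {L} _.
Arguments Node {L} _ _ _.

(* Nodes are addressed by the list of directions from the root
   (false = left, true = right). *)
Fixpoint subtree {L} (T : dtree L) (addr : list bool) : option (dtree L) :=
  match addr with
  | [] => Some T
  | d :: a =>
      match T with
      | Leaf _ => None
      | Node _ l r => subtree (if d then r else l) a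
      end
  end.

(* Execution: [tb addr] is the tie-breaking choice (true = right) at the
   internal node with address [addr] (relevant only when v_u(w) = 0). *)
Fixpoint run {L} (T : dtree L) (w : vec) (tb : list bool -> bool)
    (addr : list bool) : list bool * option L :=
  match T with
  | Leaf l => ([], l)
  | Node v l r =>
      let d := if Rlt_dec (v w) 0 then false
               else if Rlt_dec 0 (v w) then true
               else tb addr in
      let res := run (if d then r else l) w tb (addr ++ [d]) in
      (d :: fst res, snd res)
  end.

Definition valid_tree (Q : R -> Prop) (n : nat) (W : vec -> Prop) {L}
    (T : dtree L) : Prop :=
  forall addr v l r, subtree T addr = Some (Node v l r) ->
    (forall x, W x -> Q (v x)) /\ cont_on n W v.

Definition continues (Q : R -> Prop) (n : nat) (W : vec -> Prop)
    (h : R -> vec) (w : vec) : Prop :=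
  exists delta, delta > 0 /\
    forall a, 0 < a < delta ->
      exists eps, eps > 0 /\ forall y, nbhd Q n (vadd w (h a)) eps y -> W y.

(* f is increasing (s = 1), constant (s = 0), decreasing (s = -1)
   into direction h at w *)
Definition dir_sign (Q : R -> Prop) (n : nat) (W : vec -> Prop)
    (f : vec -> R) (h : R -> vec) (w : vec) (s : R) : Prop :=
  exists delta, delta > 0 /\
    forall a, 0 < a < delta ->
      exists eps, eps > 0 /\
        forall y, nbhd Q n (vadd w (h a)) eps y ->
          W y /\ sgn (f y - f w) = s.

Definition decreasing_dir Q n W f h w := dir_sign Q n W f h w (-1).

Definition admissible_direction (Q : R -> Prop) (n : nat) (W : vec -> Prop)
    (w : vec) (h : R -> vec) : Prop :=
  h 0 = vzero /\
  (forall a, Qpt Q n (h a)) /\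
  (forall eps, eps > 0 -> exists delta, delta > 0 /\
      forall a, Rabs a < delta -> dist n (h a) (h 0) < eps) /\
  continues Q n W h w.

Definition uses_symbolic_perturbation (Q : R -> Prop) (I : Type)
    (S : I -> structure) (A : forall i, dtree (s_L (S i)))
    (tb : forall i : I, vec -> list bool -> bool) : Prop :=
  forall i w, s_W (S i) w ->
    exists h : R -> vec,
      admissible_direction Q (s_n (S i)) (s_W (S i)) w h /\
      (forall addr v l r, subtree (A i) addr = Some (Node v l r) ->
         dir_sign Q (s_n (S i)) (s_W (S i)) v h w (-1) \/
         dir_sign Q (s_n (S i)) (s_W (S i)) v h w 0 \/
         dir_sign Q (s_n (S i)) (s_W (S i)) v h w 1) /\
      (forall addr rest v l r,
         addr ++ rest = fst (run (A i) w (tb i w) []) ->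
         subtree (A i) addr = Some (Node v l r) ->
         v w = 0 ->
         (tb i w addr = false <->
            dir_sign Q (s_n (S i)) (s_W (S i)) v h w (-1))).

Definition alg_path {I} (S : I -> structure) (A : forall i, dtree (s_L (S i)))
    (tb : forall i : I, vec -> list bool -> bool) (i : I) (w : vec) : list bool :=
  fst (run (A i) w (tb i w) []).

Definition alg_out {I} (S : I -> structure) (A : forall i, dtree (s_L (S i)))
    (tb : forall i : I, vec -> list bool -> bool) (i : I) (w : vec)
    : option (s_L (S i)) :=
  snd (run (A i) w (tb i w) []).

(* null case: C i w means (S i, w) ∈ C *)
Definition null_case (Q : R -> Prop) {I} (S : I -> structure)
    (C : I -> vec -> Prop) : Prop :=
  forall i, nowhere_open Q (s_n (S i)) (fun w => s_W (S i) w /\ C i w).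

(* Main.v *)
Require Import Defs.
From Stdlib Require Import Reals List Lra Classical.
Require Import Defs.
Import ListNotations.
Open Scope R_scope.

Lemma sgn_pos x : x > 0 -> sgn x = 1.
Proof. intro H. unfold sgn. destruct (Req_EM_T x 0); [lra|].
  rewrite Rabs_right by lra. field. lra. Qed.
Lemma sgn_neg x : x < 0 -> sgn x = -1.
Proof. intro H. unfold sgn. destruct (Req_EM_T x 0); [lra|].
  rewrite Rabs_left by lra. field. lra. Qed.
Lemma sgn_zero : sgn 0 = 0.
Proof. unfold sgn. destruct (Req_EM_T 0 0); [reflexivity|lra]. Qed.
Lemma sgn_m1 x : sgn x = -1 -> x < 0.
Proof. intro H. destruct (Rtotal_order x 0) as [|[|]]; auto.
  subst; rewrite sgn_zero in H; lra. rewrite sgn_pos in H; lra. Qed.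
Lemma sgn_1 x : sgn x = 1 -> x > 0.
Proof. intro H. destruct (Rtotal_order x 0) as [|[|]]; auto.
  rewrite sgn_neg in H; lra. subst; rewrite sgn_zero in H; lra. Qed.
Lemma sgn_0 x : sgn x = 0 -> x = 0.
Proof. intro H. destruct (Rtotal_order x 0) as [|[|]]; auto.
  rewrite sgn_neg in H; lra. rewrite sgn_pos in H; lra. Qed.

Lemma sumsq_self n x : sumsq n x x = 0.
Proof. induction n; simpl; [reflexivity|]. rewrite IHn. ring. Qed.
Lemma sumsq_nonneg n x y : 0 <= sumsq n x y.
Proof. induction n; simpl; [lra|]. pose proof (pow2_ge_0 (x n - y n)). lra. Qed.
Lemma sumsq_shift n w u : sumsq n w (vadd w u) = sumsq n u vzero.
Proof. induction n; simpl; [reflexivity|]. rewrite IHn. unfold vadd, vzero. ring. Qed.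
Lemma sumsq_tri n x y z : sumsq n x z <= 2 * sumsq n x y + 2 * sumsq n y z.
Proof. induction n; simpl; [lra|].
  assert ((x n - z n)^2 <= 2*(x n - y n)^2 + 2*(y n - z n)^2)
    by (pose proof (pow2_ge_0 ((x n - y n) - (y n - z n))); nra). lra. Qed.

Lemma dist_self n x : dist n x x = 0.
Proof. unfold dist. rewrite sumsq_self. apply sqrt_0. Qed.
Lemma dist_shift n w u : dist n w (vadd w u) = dist n u vzero.
Proof. unfold dist. rewrite sumsq_shift. reflexivity. Qed.

Lemma sq_lt s e : 0 <= s -> sqrt s < e -> s < e * e.
Proof. intros H1 H2. pose proof (sqrt_sqrt s H1). pose proof (sqrt_pos s). nra. Qed.

Lemma dist_tri2 n x y z e : dist n x y < e -> dist n y z < e -> dist n x z < 2 * e.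
Proof. unfold dist. intros H1 H2.
  pose proof (sumsq_nonneg n x y). pose proof (sumsq_nonneg n y z).
  pose proof (sumsq_nonneg n x z).
  assert (e > 0) by (pose proof (sqrt_pos (sumsq n x y)); lra).
  apply sq_lt in H1; auto. apply sq_lt in H2; auto.
  pose proof (sumsq_tri n x y z).
  rewrite <- (sqrt_square (2*e)) by lra. apply sqrt_lt_1; nra. Qed.

Lemma Qpt_add Q n x y : subfield Q -> Qpt Q n x -> Qpt Q n y -> Qpt Q n (vadd x y).
Proof. intros [_ [_ [Hadd _]]] [Hx1 Hx2] [Hy1 Hy2]. split; intros; unfold vadd.
  apply Hadd; auto. rewrite Hx2, Hy2 by auto. ring. Qed.

Lemma nbhd_center Q n x e : Qpt Q n x -> e > 0 -> nbhd Q n x e x.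
Proof. intros. split; auto. rewrite dist_self. lra. Qed.

Lemma nbhd_mono Q n x e e' y : e <= e' -> nbhd Q n x e y -> nbhd Q n x e' y.
Proof. intros H [H1 H2]. split; auto. lra. Qed.

Definition dirf (v : vec -> R) x (tb : list bool -> bool) addr : bool :=
  if Rlt_dec (v x) 0 then false else if Rlt_dec 0 (v x) then true else tb addr.

Lemma run_node {L} v (l r : dtree L) x tb addr :
  run (Node v l r) x tb addr =
  (dirf v x tb addr :: fst (run (if dirf v x tb addr then r else l) x tb (addr ++ [dirf v x tb addr])),
   snd (run (if dirf v x tb addr then r else l) x tb (addr ++ [dirf v x tb addr]))).
Proof. reflexivity. Qed.

Lemma subtree_step {L} (T : dtree L) addr v l r d :
  subtree T addr = Some (Node v l r) -> subtree T (addr ++ [d]) = Some (if d then r else l).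
Proof. revert T. induction addr as [|b a IH]; intros T H; simpl in *.
  - destruct T; cbn in H; inversion H; subst; destruct d; [destruct r|destruct l]; reflexivity.
  - destruct T; [discriminate|]. apply IH; auto. Qed.

Lemma dir_excl Q n W f h w s1 s2 : subfield Q -> Qpt Q n w -> (forall a, Qpt Q n (h a)) ->
  dir_sign Q n W f h w s1 -> dir_sign Q n W f h w s2 -> s1 = s2.
Proof. intros HQ Hw Hh [d1 [Hd1 H1]] [d2 [Hd2 H2]].
  set (a := Rmin d1 d2 / 2).
  assert (Ha : 0 < Rmin d1 d2) by (apply Rmin_pos; auto).
  pose proof (Rmin_l d1 d2). pose proof (Rmin_r d1 d2).
  destruct (H1 a) as [e1 [He1 K1]]. unfold a; lra.
  destruct (H2 a) as [e2 [He2 K2]]. unfold a; lra.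
  assert (Qpt Q n (vadd w (h a))) by (apply Qpt_add; auto).
  destruct (K1 _ (nbhd_center _ _ _ _ H3 He1)) as [_ E1].
  destruct (K2 _ (nbhd_center _ _ _ _ H3 He2)) as [_ E2]. congruence. Qed.

Lemma subtree_nil {L} (T : dtree L) : subtree T [] = Some T.
Proof. destruct T; reflexivity. Qed.

Lemma main_ind (Q : R -> Prop) (HQ : subfield Q)
  (I : Type) (S : I -> structure) (HS : forall i, valid_structure Q (S i))
  (A : forall i, dtree (s_L (S i)))
  (HA : forall i, valid_tree Q (s_n (S i)) (s_W (S i)) (A i))
  (tb : forall i : I, vec -> list bool -> bool)
  (Hsp : uses_symbolic_perturbation Q I S A tb)
  (i : I) (w : vec) (Hw : s_W (S i) w) (h : R -> vec)
  (hQ : forall a, Qpt Q (s_n (S i)) (h a))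
  (Hdir : forall addr v l r, subtree (A i) addr = Some (Node v l r) ->
         dir_sign Q (s_n (S i)) (s_W (S i)) v h w (-1) \/
         dir_sign Q (s_n (S i)) (s_W (S i)) v h w 0 \/
         dir_sign Q (s_n (S i)) (s_W (S i)) v h w 1)
  (Htie : forall addr rest v l r,
         addr ++ rest = fst (run (A i) w (tb i w) []) ->
         subtree (A i) addr = Some (Node v l r) ->
         v w = 0 ->
         (tb i w addr = false <->
            dir_sign Q (s_n (S i)) (s_W (S i)) v h w (-1))) :
  forall T addr, subtree (A i) addr = Some T ->
    addr ++ fst (run T w (tb i w) addr) = fst (run (A i) w (tb i w) []) ->
    exists delta, delta > 0 /\ exists rr, rr > 0 /\ forall a, 0 < a < delta ->
      exists e, e > 0 /\ forall y (U : vec -> Prop), is_open Q (s_n (S i)) U -> U y ->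
        (forall z, U z -> nbhd Q (s_n (S i)) (vadd w (h a)) e z /\ s_W (S i) z) ->
        dist (s_n (S i)) w y < rr ->
        addr ++ fst (run T y (tb i y) addr) = fst (run (A i) y (tb i y) []) ->
        run T y (tb i y) addr = run T w (tb i w) addr.
Proof.
  assert (HwQ : Qpt Q (s_n (S i)) w) by (apply (proj1 (proj1 (HS i))); auto).
  induction T as [o | v l IHl r IHr]; intros addr Hsub Hpre.
  { exists 1; split; [lra|]. exists 1; split; [lra|]. intros a Ha.
    exists 1; split; [lra|]. intros. reflexivity. }
  set (d := dirf v w (tb i w) addr).
  assert (Hsub' : subtree (A i) (addr ++ [d]) = Some (if d then r else l))
    by (apply (subtree_step _ _ v); auto).
  assert (Hpre' : (addr ++ [d]) ++ fst (run (if d then r else l) w (tb i w) (addr ++ [d]))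
                  = fst (run (A i) w (tb i w) [])).
  { rewrite <- Hpre, (run_node v l r w). fold d. rewrite <- app_assoc. reflexivity. }
  assert (IH : exists delta, delta > 0 /\ exists rr, rr > 0 /\ forall a, 0 < a < delta ->
      exists e, e > 0 /\ forall y (U : vec -> Prop), is_open Q (s_n (S i)) U -> U y ->
        (forall z, U z -> nbhd Q (s_n (S i)) (vadd w (h a)) e z /\ s_W (S i) z) ->
        dist (s_n (S i)) w y < rr ->
        (addr ++ [d]) ++ fst (run (if d then r else l) y (tb i y) (addr ++ [d]))
          = fst (run (A i) y (tb i y) []) ->
        run (if d then r else l) y (tb i y) (addr ++ [d])
          = run (if d then r else l) w (tb i w) (addr ++ [d])).
  { destruct d; [apply IHr|apply IHl]; auto. }
  clear IHl IHr.
  assert (ND : exists delta, delta > 0 /\ exists rr, rr > 0 /\ forall a, 0 < a < delta ->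
      exists e, e > 0 /\ forall y (U : vec -> Prop), is_open Q (s_n (S i)) U -> U y ->
        (forall z, U z -> nbhd Q (s_n (S i)) (vadd w (h a)) e z /\ s_W (S i) z) ->
        dist (s_n (S i)) w y < rr ->
        addr ++ fst (run (Node v l r) y (tb i y) addr) = fst (run (A i) y (tb i y) []) ->
        dirf v y (tb i y) addr = d).
  { destruct (HA i addr v l r Hsub) as [_ Hc].
    assert (T3 : v w < 0 \/ v w > 0 \/ v w = 0) by (destruct (Rtotal_order (v w) 0) as [|[|]]; auto).
    destruct T3 as [Hneg|[Hpos|Hz]].
    - destruct (Hc w (- v w) Hw ltac:(lra)) as [rv [Hrv Krv]].
      exists 1; split; [lra|]. exists rv; split; auto. intros a Ha.
      exists 1; split; [lra|]. intros y U HU Uy HUs Hd _.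
      destruct (HUs y Uy) as [_ Wy]. specialize (Krv y Wy Hd).
      assert (v y < 0) by (apply Rabs_def2 in Krv; lra).
      unfold d, dirf. destruct (Rlt_dec (v y) 0); [|lra].
      destruct (Rlt_dec (v w) 0); [reflexivity|lra].
    - destruct (Hc w (v w) Hw ltac:(lra)) as [rv [Hrv Krv]].
      exists 1; split; [lra|]. exists rv; split; auto. intros a Ha.
      exists 1; split; [lra|]. intros y U HU Uy HUs Hd _.
      destruct (HUs y Uy) as [_ Wy]. specialize (Krv y Wy Hd).
      assert (v y > 0) by (apply Rabs_def2 in Krv; lra).
      unfold d, dirf. destruct (Rlt_dec (v y) 0); [lra|].
      destruct (Rlt_dec 0 (v y)); [|lra].
      destruct (Rlt_dec (v w) 0); [lra|].
      destruct (Rlt_dec 0 (v w)); [reflexivity|lra].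
    - assert (Hdw : d = tb i w addr).
      { unfold d, dirf. destruct (Rlt_dec (v w) 0); [lra|].
        destruct (Rlt_dec 0 (v w)); [lra|reflexivity]. }
      pose proof (Htie addr _ v l r Hpre Hsub Hz) as Tw.
      destruct (Hdir addr v l r Hsub) as [Ds | [Ds | Ds]].
      + assert (d = false) by (rewrite Hdw; apply Tw; auto).
        destruct Ds as [ds [Hds Kds]].
        exists ds; split; auto. exists 1; split; [lra|]. intros a Ha.
        destruct (Kds a Ha) as [e [He Ke]]. exists e; split; auto.
        intros y U HU Uy HUs _ _.
        destruct (Ke y (proj1 (HUs y Uy))) as [_ Sg].
        apply sgn_m1 in Sg. rewrite H. unfold dirf.
        destruct (Rlt_dec (v y) 0); [reflexivity|lra].
      + assert (d = true).
        { rewrite Hdw. destruct (tb i w addr) eqn:E; auto.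
          pose proof (proj1 Tw eq_refl) as E2. pose proof (dir_excl _ _ _ _ _ _ _ _ HQ HwQ hQ E2 Ds). lra. }
        destruct Ds as [ds [Hds Kds]].
        exists ds; split; auto. exists 1; split; [lra|]. intros a Ha.
        destruct (Kds a Ha) as [e [He Ke]]. exists e; split; auto.
        intros y U HU Uy HUs _ Hpy.
        assert (Hv0 : forall z, U z -> v z = 0).
        { intros z Uz. destruct (Ke z (proj1 (HUs z Uz))) as [_ Sg].
          apply sgn_0 in Sg. lra. }
        destruct (HUs y Uy) as [[Qy _] Wy].
        rewrite H. unfold dirf. rewrite (Hv0 y Uy).
        destruct (Rlt_dec 0 0); [lra|]. destruct (Rlt_dec 0 0); [lra|].
        destruct (tb i y addr) eqn:E; auto. exfalso.
        destruct (Hsp i y Wy) as [hy [[hy0 [hyQ [hyc _]]] [_ Tiey]]].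
        apply (Tiey addr _ v l r Hpy Hsub (Hv0 y Uy)) in E.
        destruct (proj2 HU y Uy) as [ry [Hry Kry]].
        destruct E as [dy [Hdy Kdy]].
        destruct (hyc ry Hry) as [dh [Hdh Kdh]].
        set (a' := Rmin dy dh / 2).
        assert (0 < Rmin dy dh) by (apply Rmin_pos; auto).
        pose proof (Rmin_l dy dh). pose proof (Rmin_r dy dh).
        destruct (Kdy a') as [ey [Hey Key]]. unfold a'; lra.
        assert (Qz : Qpt Q (s_n (S i)) (vadd y (hy a'))) by (apply Qpt_add; auto).
        destruct (Key _ (nbhd_center _ _ _ _ Qz Hey)) as [_ Sg].
        assert (Uz : U (vadd y (hy a'))).
        { apply Kry. split; auto. rewrite dist_shift, <- hy0. apply Kdh.
          unfold a'. rewrite Rabs_right; lra. }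
        rewrite (Hv0 _ Uz), (Hv0 y Uy), Rminus_0_r, sgn_zero in Sg. lra.
      + assert (d = true).
        { rewrite Hdw. destruct (tb i w addr) eqn:E; auto.
          pose proof (proj1 Tw eq_refl) as E2. pose proof (dir_excl _ _ _ _ _ _ _ _ HQ HwQ hQ E2 Ds). lra. }
        destruct Ds as [ds [Hds Kds]].
        exists ds; split; auto. exists 1; split; [lra|]. intros a Ha.
        destruct (Kds a Ha) as [e [He Ke]]. exists e; split; auto.
        intros y U HU Uy HUs _ _.
        destruct (Ke y (proj1 (HUs y Uy))) as [_ Sg].
        apply sgn_1 in Sg. rewrite H. unfold dirf.
        destruct (Rlt_dec (v y) 0); [lra|].
        destruct (Rlt_dec 0 (v y)); [reflexivity|lra]. }
  destruct IH as [d1 [Hd1 [r1 [Hr1 K1]]]].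
  destruct ND as [d2 [Hd2 [r2 [Hr2 K2]]]].
  exists (Rmin d1 d2); split; [apply Rmin_pos; auto|].
  exists (Rmin r1 r2); split; [apply Rmin_pos; auto|].
  intros a Ha. pose proof (Rmin_l d1 d2). pose proof (Rmin_r d1 d2).
  destruct (K1 a ltac:(lra)) as [e1 [He1 L1]].
  destruct (K2 a ltac:(lra)) as [e2 [He2 L2]].
  exists (Rmin e1 e2); split; [apply Rmin_pos; auto|].
  intros y U HU Uy HUs Hd Hpy.
  pose proof (Rmin_l e1 e2). pose proof (Rmin_r e1 e2).
  pose proof (Rmin_l r1 r2). pose proof (Rmin_r r1 r2).
  assert (Hdy : dirf v y (tb i y) addr = d).
  { apply (L2 y U HU Uy); auto; [|lra].
    intros z Uz. destruct (HUs z Uz) as [N Wz]. split; auto.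
    apply (nbhd_mono _ _ _ _ _ _ H2 N). }
  rewrite (run_node v l r y), Hdy. rewrite (run_node v l r w). fold d.
  rewrite (L1 y U HU Uy).
  - reflexivity.
  - intros z Uz. destruct (HUs z Uz) as [N Wz]. split; auto.
    apply (nbhd_mono _ _ _ _ _ _ H1 N).
  - lra.
  - rewrite <- Hpy, (run_node v l r y), Hdy, <- app_assoc. reflexivity.
Qed.

Lemma key (Q : R -> Prop) (HQ : subfield Q)
  (I : Type) (S : I -> structure) (HS : forall i, valid_structure Q (S i))
  (A : forall i, dtree (s_L (S i)))
  (HA : forall i, valid_tree Q (s_n (S i)) (s_W (S i)) (A i))
  (tb : forall i : I, vec -> list bool -> bool)
  (Hsp : uses_symbolic_perturbation Q I S A tb)
  (C : I -> vec -> Prop) (HC : null_case Q S C) :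
  forall i w, s_W (S i) w -> forall eps, eps > 0 ->
    exists y, s_W (S i) y /\ ~ C i y /\ dist (s_n (S i)) w y < eps /\
      run (A i) y (tb i y) [] = run (A i) w (tb i w) [].
Proof.
  intros i w Hw eps Heps.
  destruct (Hsp i w Hw) as [h [[h0 [hQ [hc hcont]]] [Hdir Htie]]].
  destruct (main_ind Q HQ I S HS A HA tb Hsp i w Hw h hQ Hdir Htie (A i) []
              (subtree_nil _) eq_refl) as [delta [Hdelta [rr [Hrr K]]]].
  destruct hcont as [dc [Hdc Kc]].
  set (m := Rmin rr eps).
  assert (Hm : m > 0) by (apply Rmin_pos; auto).
  assert (M1 : m <= rr) by (unfold m; apply Rmin_l). assert (M2 : m <= eps) by (unfold m; apply Rmin_r).
  destruct (hc (m/2) ltac:(lra)) as [dh [Hdh Kdh]].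
  set (a := Rmin (Rmin delta dc) dh / 2).
  assert (0 < Rmin (Rmin delta dc) dh) by (repeat apply Rmin_pos; auto).
  pose proof (Rmin_l (Rmin delta dc) dh). pose proof (Rmin_r (Rmin delta dc) dh).
  pose proof (Rmin_l delta dc). pose proof (Rmin_r delta dc).
  destruct (K a ltac:(unfold a; lra)) as [e [He Ke]].
  destruct (Kc a ltac:(unfold a; lra)) as [ec [Hec Kec]].
  assert (HwQ : Qpt Q (s_n (S i)) w) by (apply (proj1 (proj1 (HS i))); auto).
  assert (Qx0 : Qpt Q (s_n (S i)) (vadd w (h a))) by (apply Qpt_add; auto).
  assert (Wx0 : s_W (S i) (vadd w (h a))) by (apply Kec, nbhd_center; auto).
  assert (Dx0 : dist (s_n (S i)) w (vadd w (h a)) < m/2).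
  { rewrite dist_shift, <- h0. apply Kdh. unfold a. rewrite Rabs_right; lra. }
  set (e0 := Rmin (Rmin e ec) (m/2)).
  assert (Hpe0 : e0 > 0) by (repeat apply Rmin_pos; auto; lra).
  pose proof (Rmin_l (Rmin e ec) (m/2)). pose proof (Rmin_r (Rmin e ec) (m/2)).
  pose proof (Rmin_l e ec).
  assert (E1 : e0 <= m/2) by (unfold e0; lra). assert (E2 : e0 <= e) by (unfold e0; lra).
  destruct (proj2 (proj1 (HS i)) _ e0 Wx0 Hpe0) as [U [HU [[u Uu] HUs]]].
  destruct (classic (exists y, U y /\ ~ C i y)) as [[y [Uy NCy]] | NE].
  - destruct (HUs y Uy) as [Ny Wy].
    assert (Dy : dist (s_n (S i)) w y < 2 * (m/2)).
    { apply (dist_tri2 _ _ (vadd w (h a))); [exact Dx0|]. destruct Ny as [_ Ny]. lra. }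
    exists y. split; auto. split; auto. split; [lra|].
    apply (Ke y U HU Uy).
    + intros z Uz. destruct (HUs z Uz) as [N Wz]. split; auto.
      apply (nbhd_mono _ _ _ e0); auto.
    + lra.
    + reflexivity.
  - exfalso. apply (HC i U HU) with (x := u); auto.
    intros x Ux. split; [apply (HUs x Ux)|].
    apply NNPP. intro NC. apply NE. exists x; auto.
Qed.

Theorem theorem2
  (Q : R -> Prop) (HQ : subfield Q)
  (I : Type) (S : I -> structure) (HS : forall i, valid_structure Q (S i))
  (A : forall i, dtree (s_L (S i)))
  (HA : forall i, valid_tree Q (s_n (S i)) (s_W (S i)) (A i))
  (tb : forall i : I, vec -> list bool -> bool)
  (Hsp : uses_symbolic_perturbation Q I S A tb)
  (C : I -> vec -> Prop) (HC : null_case Q S C) :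
  (* (a) *)
  ((forall i w, s_W (S i) w -> ~ C i w ->
      exists l, alg_out S A tb i w = Some l) ->
   forall i w, s_W (S i) w -> exists l, alg_out S A tb i w = Some l) /\
  (* (b) *)
  (forall (rho : forall i : I, list bool -> nat) (t : I -> nat),
     (forall i w, s_W (S i) w -> ~ C i w ->
        (rho i (alg_path S A tb i w) <= t i)%nat) ->
     forall i w, s_W (S i) w -> (rho i (alg_path S A tb i w) <= t i)%nat) /\
  (* (c) *)
  (forall b : I -> vec -> R,
     (forall i w, s_W (S i) w -> exists l, alg_out S A tb i w = Some l) ->
     (forall i, cont_on (s_n (S i)) (s_W (S i)) (b i)) ->
     (forall i w l, s_W (S i) w -> ~ C i w -> alg_out S A tb i w = Some l ->
        s_cost (S i) w l <= b i w) ->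
     forall i w l, s_W (S i) w -> alg_out S A tb i w = Some l ->
        s_cost (S i) w l <= b i w).
Proof.
  pose proof (key Q HQ I S HS A HA tb Hsp C HC) as K.
  split; [|split].
  - intros H i w Hw. destruct (K i w Hw 1 ltac:(lra)) as [y [Wy [NC [_ E]]]].
    destruct (H i y Wy NC) as [l Hl]. exists l. unfold alg_out in *. rewrite <- E. auto.
  - intros rho t H i w Hw. destruct (K i w Hw 1 ltac:(lra)) as [y [Wy [NC [_ E]]]].
    specialize (H i y Wy NC). unfold alg_path in *. rewrite <- E. auto.
  - intros b _ Hb H i w l Hw Hl.
    destruct (Rle_lt_dec (s_cost (S i) w l) (b i w)) as [|Hlt]; auto. exfalso.
    set (g := s_cost (S i) w l - b i w).
    assert (Hg : g / 2 > 0) by (unfold g; lra).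
    destruct (HS i) as [_ [_ [_ Hcost]]].
    destruct (Hcost l w (g/2) Hw Hg) as [d1 [Hd1 K1]].
    destruct (Hb i w (g/2) Hw Hg) as [d2 [Hd2 K2]].
    destruct (K i w Hw (Rmin d1 d2) ltac:(apply Rmin_pos; auto)) as [y [Wy [NC [D E]]]].
    pose proof (Rmin_l d1 d2). pose proof (Rmin_r d1 d2).
    assert (Hly : alg_out S A tb i y = Some l) by (unfold alg_out in *; rewrite E; auto).
    specialize (H i y l Wy NC Hly).
    specialize (K1 y Wy ltac:(lra)). specialize (K2 y Wy ltac:(lra)).
    apply Rabs_def2 in K1. apply Rabs_def2 in K2. unfold g in *. lra.
Qed.
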